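(* Let $d \ge 3$, $F \leq F' \leq \mathrm{Sym}(\Omega)$ with $F'$ preserving each $F$-orbit in $\Omega$, and let $n = [F':F]$. Then the map $\varphi: G(F,F') \to G_{n,d}$, $\varphi(\gamma) = (\rho_\gamma, \gamma)$, where $\rho_\gamma = (\rho_{\gamma,v})_{v \in V_d}$ and $\rho_{\gamma,v} = \alpha(\sigma(\gamma,\gamma^{-1}v))$, is a well-defined group homomorphism which is injective and continuous, and whose image is closed and cocompact in $G_{n,d}$.
   Context: $\Omega$ is a set with $|\Omega|=d$; $T_d$ is the $d$-regular tree with vertex set $V_d$, edge set $E_d$, and a coloring $c: E_d \to \Omega$ restricting at every vertex $v$ to a bijection from the set $E(v)$ of edges at $v$ onto $\Omega$. The local permutation of $g\in\mathrm{Aut}(T_d)$ at $v$ is $\sigma(g,v) = c|_{E(gv)} \circ g \circ (c|_{E(v)})^{-1}$. $U(F)$ is the group of $g$ with $\sigma(g,v) \in F$ for all $v$; $G(F,F')$ is the group of $g$ with $\sigma(g,v) \in F'$ for all $v$ and $\sigma(g,v) \in F$ for all but finitely many $v$, endowed with the group topology for which the inclusion of $U(F)$ (with topology induced from $\mathrm{Aut}(T_d)$) is continuous and open. $\Sigma_n = \{0,\dots,n-1\}$, $\mathfrak{S}_n = \mathrm{Sym}(\Sigma_n)$, $\mathfrak{S}_{n-1}$ the stabilizer of $0$. Fix a bijection $\Sigma_n \to F'/F$ sending $0$ to the coset $F$; $\alpha: F' \to \mathfrak{S}_n$ is the homomorphism induced by the left action of $F'$ on $F'/F$ (so $\alpha(F)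 \leq \mathfrak{S}_{n-1}$). $G_{n,d} = \mathfrak{S}_n^{V_d,\mathfrak{S}_{n-1}} \rtimes \mathrm{Aut}(T_d)$, where $\mathfrak{S}_n^{V_d,\mathfrak{S}_{n-1}}$ is the group of $(\sigma_v)_{v\in V_d}$ with $\sigma_v \in \mathfrak S_{n-1}$ for all but finitely many $v$, $\mathrm{Aut}(T_d)$ acting by $(\gamma\sigma)_v=\sigma_{\gamma^{-1}v}$; it carries the locally compact topology for which $\mathfrak{S}_{n-1}^{V_d}\rtimes\mathrm{Aut}(T_d)$ with the product topology is an open subgroup. *)

(* Defs.v *)
From HB Require Import structures.
From Stdlib Require List.
From mathcomp Require Import all_boot all_order all_fingroup.
Set Implicit Arguments. Unset Strict Implicit. Unset Printing Implicit Defensive.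

(* The d-regular tree T_d with a legal edge colouring by Omega = 'I_d. *)
(* Model: vertices are reduced words in the free product of d copies   *)
(* of Z/2 (no two consecutive letters equal), written with the most    *)
(* recent letter at the head.  The neighbour of v along colour c is    *)
(* [step v c] (multiply by the involution c); the edge {v, step v c}   *)
(* has colour c.  Hence E(v) <-> Omega via c |-> {v, step v c}, and    *)
(* c restricted to E(v) is a bijection onto Omega for every v.          *)

Definition word_ok d (s : seq 'I_d) : bool := sorted (fun a b : 'I_d => a != b) s.

Definition vert d := {s : seq 'I_d | word_ok s}.

Definition step_seq d (c : 'I_d) (s : seq 'I_d) : seq 'I_d :=
  if s is a :: s' then (if a == c then s' else c :: s) else [:: c].

Lemma step_ok d (c : 'I_d) (s : seq 'I_d) : word_ok s -> word_ok (step_seq c s).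
Proof.
case: s => [|a s'] //=; case: eqP => [_|/eqP ne].
  by move/path_sorted.
by rewrite /word_ok /= eq_sym ne.
Qed.

Definition step d (v : vert d) (c : 'I_d) : vert d :=
  exist _ (step_seq c (sval v)) (step_ok c (proj2_sig v)).

Definition adj d (u v : vert d) : bool := [exists c, step u c == v].

Record aut d := Aut {
  af : vert d -> vert d;
  ai : vert d -> vert d;
  afK : cancel af ai;
  aiK : cancel ai af;
  af_adj : forall u v, adj (af u) (af v) = adj u v }.

Definition aut_mul d (g h : aut d) : aut d.
Proof.
refine (@Aut d (af g \o af h) (ai h \o ai g) _ _ _).
- by move=> x /=; rewrite !afK.
- by move=> x /=; rewrite !aiK.
- by move=> u v /=; rewrite !af_adj.
Defined.

Definition aut_inv d (g : aut d) : aut d.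
Proof.
refine (@Aut d (ai g) (af g) (aiK g) (afK g) _).
by move=> u v; rewrite -(af_adj g) !aiK.
Defined.

(* Local permutation sigma(g,v) : c |-> colour of the edge g({v, step v c}),
   i.e. the c' with step (g v) c' = g (step v c).  (When the function is
   not injective -- which never happens for an automorphism -- we return 1.) *)
Definition lperm_fun d (g : aut d) (v : vert d) : 'I_d -> 'I_d :=
  fun c => odflt c [pick c' | step (af g v) c' == af g (step v c)].

Definition lperm d (g : aut d) (v : vert d) : {perm 'I_d} :=
  match boolP (injectiveb (lperm_fun g v)) with
  | AltTrue H => perm (injectiveP _ H)
  | AltFalse _ => 1%g
  end.

Definition in_U d (F : {set {perm 'I_d}}) (g : aut d) : Prop :=
  forall v, lperm g v \in F.

Definition in_GFF d (F F' : {set {perm 'I_d}}) (g : aut d) : Prop :=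
  (forall v, lperm g v \in F') /\
  exists S : seq (vert d), forall v, v \notin S -> lperm g v \in F.

(* Topology on G(F,F'): U(F) (with the topology induced from Aut(T_d),
   i.e. pointwise convergence on vertices) is an open subgroup; a basis of
   neighbourhoods of g is  g * {k in U(F) | k fixes the finite set S}. *)
Definition open_GFF d (F F' : {set {perm 'I_d}}) (U : aut d -> Prop) : Prop :=
  forall g, in_GFF F F' g -> U g ->
  exists S : seq (vert d), forall h, in_GFF F F' h ->
    in_U F (aut_mul (aut_inv g) h) ->
    (forall v, v \in S -> af (aut_mul (aut_inv g) h) v = v) -> U h.

(* G_{n,d} = S_n^{V_d, S_{n-1}} x| Aut(T_d).  Here [z] is the point 0  *)
(* of Sigma_n = 'I_n, S_{n-1} its stabiliser.  Elements are pairs       *)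
(* (sigma, gamma); membership also requires the finiteness condition.  *)
(* NB: mathcomp's perm product is (p * q) x = q (p x), so the          *)
(* composition p o q is written (q * p)%g below.                       *)
Definition Gel n d := ((vert d -> {perm 'I_n}) * aut d)%type.

Definition in_Gnd n d (z : 'I_n) (x : Gel n d) : Prop :=
  exists S : seq (vert d), forall v, v \notin S -> x.1 v z = z.

(* (sigma, g)(tau, h) = (sigma . g tau, g h),  (g tau)_v = tau_{g^-1 v} *)
Definition Gmul n d (x y : Gel n d) : Gel n d :=
  (fun v => (y.1 (ai x.2 v) * x.1 v)%g, aut_mul x.2 y.2).

Definition Ginv n d (x : Gel n d) : Gel n d :=
  (fun v => (x.1 (af x.2 v))^-1%g, aut_inv x.2).

(* basic neighbourhoods of 1 in the open subgroup S_{n-1}^{V_d} x| Aut(T_d)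
   with the product topology *)
Definition nbhd1 n d (z : 'I_n) (S : seq (vert d)) (x : Gel n d) : Prop :=
  (forall v, x.1 v z = z) /\
  (forall v, v \in S -> x.1 v = 1%g /\ af x.2 v = v).

Definition open_Gnd n d (z : 'I_n) (U : Gel n d -> Prop) : Prop :=
  forall x, in_Gnd z x -> U x ->
  exists S : seq (vert d), forall y, in_Gnd z y ->
    nbhd1 z S (Gmul (Ginv x) y) -> U y.

Definition closed_Gnd n d (z : 'I_n) (A : Gel n d -> Prop) : Prop :=
  open_Gnd z (fun x => ~ A x).

(* H cocompact: the coset space G_{n,d}/H (left cosets xH, quotient
   topology) is compact, i.e. every cover of G_{n,d} by open sets
   saturated under right multiplication by H has a finite subcover. *)
Definition cocompact_Gnd n d (z : 'I_n) (H : Gel n d -> Prop) : Prop :=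
  forall (I : Type) (U : I -> Gel n d -> Prop),
    (forall i, open_Gnd z (U i)) ->
    (forall i x h, in_Gnd z x -> H h -> U i x -> U i (Gmul x h)) ->
    (forall x, in_Gnd z x -> exists i, U i x) ->
    exists s : list I, forall x, in_Gnd z x -> exists2 i, List.In i s & U i x.

Definition phi n d (alpha : {perm 'I_d} -> {perm 'I_n}) (g : aut d) : Gel n d :=
  (fun v => alpha (lperm g (ai g v)), g).

(* Main.v *)
Require Import Defs.
From Stdlib Require List.
From mathcomp Require Import all_boot all_order all_fingroup.
From Stdlib Require Import ClassicalEpsilon ProofIrrelevance FunctionalExtensionality Classical.
From Stdlib Require Import Lia.
From mathcomp Require Import zify.
Import Defs.
Set Implicit Arguments. Unset Strict Implicit. Unset Printing Implicit Defensive.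
Local Open Scope group_scope.

Section Tree.
Variable d : nat.
Implicit Types (u v w : vert d) (g h : aut d) (c : 'I_d) (s : seq 'I_d).

Definition root : vert d := exist _ [::] isT.

Lemma step_seqK c s : word_ok s -> step_seq c (step_seq c s) = s.
Proof.
case: s => [|a s] //=; first by rewrite eqxx.
case: eqP => [->|ne] /=.
  case: s => [|b s] //= /andP [ne' _]; by rewrite eq_sym (negbTE ne').
by rewrite eqxx.
Qed.

Lemma stepK v c : step (step v c) c = v.
Proof. apply: val_inj => /=; exact: step_seqK (proj2_sig v). Qed.

Lemma step_seq_inj s c1 c2 : step_seq c1 s = step_seq c2 s -> c1 = c2.
Proof.
case: s => [|a s] /=; first by case.
case: eqP => [<-|n1]; case: eqP => [e2|n2] //.
- move=> E; have := congr1 size E => /=; lia.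
- move=> E; have := congr1 size E => /=; lia.
- by case.
Qed.

Lemma step_inj v c1 c2 : step v c1 = step v c2 -> c1 = c2.
Proof. by move/(congr1 val) => /= /step_seq_inj. Qed.

Lemma adjP u v : reflect (exists c, step u c = v) (adj u v).
Proof.
apply: (iffP existsP) => [[c /eqP e]|[c e]]; exists c => //; exact/eqP.
Qed.

Lemma af_inj g : injective (af g).
Proof. exact: can_inj (afK g). Qed.

Lemma lperm_fun_spec g v c :
  step (af g v) (lperm_fun g v c) = af g (step v c).
Proof.
rewrite /lperm_fun; case: pickP => [c' /eqP //|H].
have : adj (af g v) (af g (step v c)) by rewrite af_adj; apply/adjP; exists c.
by case/adjP => c' e; move: (H c'); rewrite e eqxx.
Qed.

Lemma lperm_fun_inj g v : injective (lperm_fun g v).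
Proof.
move=> c1 c2 e; apply: (@step_inj v); apply: (@af_inj g).
by rewrite -!lperm_fun_spec e.
Qed.

Lemma lpermE g v c : lperm g v c = lperm_fun g v c.
Proof.
rewrite /lperm; destruct (boolP (injectiveb (lperm_fun g v))) as [H|H].
  by rewrite permE.
by case/negP: H; apply/injectiveP; exact: lperm_fun_inj.
Qed.

Lemma lperm_spec g v c : step (af g v) (lperm g v c) = af g (step v c).
Proof. by rewrite lpermE lperm_fun_spec. Qed.

Lemma lperm_uniq g v c c' :
  step (af g v) c' = af g (step v c) -> lperm g v c = c'.
Proof. by rewrite -lperm_spec => /step_inj. Qed.

Lemma lperm_mul g h v :
  lperm (aut_mul g h) v = lperm h v * lperm g (af h v).
Proof.
apply/permP => c; rewrite permM; apply: lperm_uniq => /=.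
by rewrite lperm_spec lperm_spec.
Qed.

Lemma lperm_consist g v a : lperm g (step v a) a = lperm g v a.
Proof.
apply: lperm_uniq; rewrite stepK -(stepK (af g v) (lperm g v a)).
by rewrite lperm_spec.
Qed.

Lemma lperm_fix g v :
  af g v = v -> (forall c, af g (step v c) = step v c) -> lperm g v = 1.
Proof.
move=> e1 e2; apply/permP => c; rewrite perm1; apply: lperm_uniq.
by rewrite e1 e2.
Qed.

Lemma aut_ext g h : af g =1 af h -> g = h.
Proof.
move=> e.
have ei : ai g =1 ai h.
  move=> y; apply: (@af_inj h); rewrite aiK -e aiK //.
case: g h e ei => f1 i1 a1 b1 c1 [f2 i2 a2 b2 c2] /= e ei.
have E1 := functional_extensionality _ _ e.
have E2 := functional_extensionality _ _ ei.
subst f2 i2; f_equal; apply: proof_irrelevance.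
Qed.

End Tree.

Section Constr.
Variable d : nat.
Implicit Types (u v w : vert d) (g h : aut d) (c : 'I_d) (s t : seq 'I_d).

Lemma word_ok_cons2 a b s : word_ok [:: a, b & s] = (a != b) && word_ok (b :: s).
Proof. by []. Qed.

Lemma word_ok_tail a s : word_ok (a :: s) -> word_ok s.
Proof. by case: s => [|b s] // /andP []. Qed.

Lemma step_seq_cons c b s : b != c -> step_seq c (b :: s) = [:: c, b & s].
Proof. by rewrite /= => /negbTE ->. Qed.

Lemma step_seq_ok_cons a s : word_ok (a :: s) -> step_seq a s = a :: s.
Proof. by case: s => [|b s] //= /andP [ne _]; rewrite eq_sym (negbTE ne). Qed.

Definition cons_ok (f : seq 'I_d -> {perm 'I_d}) :=
  forall a s, word_ok (a :: s) -> f (a :: s) a = f s a.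

Fixpoint Bs (f : seq 'I_d -> {perm 'I_d}) s : seq 'I_d :=
  if s is a :: s' then f s' a :: Bs f s' else [::].
Fixpoint Cs (f : seq 'I_d -> {perm 'I_d}) t : seq 'I_d :=
  if t is a :: t' then (f (Cs f t'))^-1 a :: Cs f t' else [::].

Variable f : seq 'I_d -> {perm 'I_d}.
Hypothesis Hf : cons_ok f.

Lemma CsK s : Cs f (Bs f s) = s.
Proof. by elim: s => //= a s ->; rewrite permK. Qed.

Lemma BsK t : Bs f (Cs f t) = t.
Proof. by elim: t => //= a t ->; rewrite permKV. Qed.

Lemma Bs_ok s : word_ok s -> word_ok (Bs f s).
Proof.
elim: s => // a [|b s] IH //= /andP [ne ok].
rewrite /word_ok /= -/(word_ok _) -/(Bs f s).
have := IH ok => /= ->; rewrite andbT.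
rewrite -(Hf ok) (inj_eq perm_inj); exact: ne.
Qed.

Lemma Cs_ok t : word_ok t -> word_ok (Cs f t).
Proof.
elim: t => // a [|b t] IH //= /andP [ne ok].
have okC := IH ok; move: okC; rewrite /= => okC.
rewrite /word_ok /= -/(word_ok _) okC andbT.
apply/eqP => E.
have e1 : f ((f (Cs f t))^-1 b :: Cs f t) ((f (Cs f t))^-1 b) = b.
  by rewrite Hf ?permKV.
have := congr1 (f ((f (Cs f t))^-1 b :: Cs f t)) E; rewrite permKV e1 => eab.
by move: ne; rewrite eab eqxx.
Qed.

Lemma B_step (u : seq 'I_d) c : word_ok u ->
  Bs f (step_seq c u) = step_seq (f u c) (Bs f u).
Proof.
case: u => [|a u] //= ok; case: eqP => [E|/eqP ne].
  by subst c; rewrite (Hf ok) eqxx.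
by rewrite /= -(Hf ok) (inj_eq perm_inj) (negbTE ne).
Qed.

Definition Bv (v : vert d) : vert d := exist _ (Bs f (val v)) (Bs_ok (valP v)).
Definition Cv (v : vert d) : vert d := exist _ (Cs f (val v)) (Cs_ok (valP v)).

Lemma BvK : cancel Bv Cv.
Proof. by move=> v; apply: val_inj; rewrite /= CsK. Qed.
Lemma CvK : cancel Cv Bv.
Proof. by move=> v; apply: val_inj; rewrite /= BsK. Qed.

Lemma Bv_step v c : Bv (step v c) = step (Bv v) (f (val v) c).
Proof. by apply: val_inj; rewrite /= B_step //; exact: valP. Qed.

Lemma Bv_adj u v : adj (Bv u) (Bv v) = adj u v.
Proof.
apply/adjP/adjP => [[c e]|[c <-]].
  exists ((f (val u))^-1 c); apply: (can_inj BvK).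
  by rewrite Bv_step permKV.
by exists (f (val u) c); rewrite Bv_step.
Qed.

Definition Bauto : aut d := Aut BvK CvK Bv_adj.

Lemma Bauto_root : af Bauto (root d) = root d.
Proof. exact: val_inj. Qed.

Lemma lperm_Bauto v : lperm Bauto v = f (val v).
Proof. by apply/permP => c; apply: lperm_uniq => /=; rewrite Bv_step. Qed.

End Constr.

Section RootFix.
Variable d : nat.
Implicit Types (g h : aut d) (c : 'I_d).

Definition ldata g : seq 'I_d -> {perm 'I_d} := fun s => lperm g (insubd (root d) s).

Lemma rootfix_rep g s : af g (root d) = root d -> word_ok s ->
  val (af g (insubd (root d) s)) = Bs (ldata g) s.
Proof.
move=> gr; elim: s => [|a s IH] ok.
  have -> : insubd (root d) [::] = root d by apply: val_inj; rewrite insubdK.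
  by rewrite gr.
have oks := word_ok_tail ok.
have E : insubd (root d) (a :: s) = step (insubd (root d) s) a.
  by apply: val_inj; rewrite /= !insubdK // step_seq_ok_cons.
rewrite E -lperm_spec /= (IH oks) /ldata.
case: s IH ok oks E => [|b s] IH ok oks E //=.
have E2 : insubd (root d) [:: b & s] = step (insubd (root d) s) b.
  have oks' := word_ok_tail oks.
  by apply: val_inj; rewrite /= !insubdK // step_seq_ok_cons.
rewrite -(lperm_consist g (insubd (root d) s) b) -E2 (inj_eq perm_inj).
by case/andP: ok => /negbTE; rewrite eq_sym => ->.
Qed.

Lemma Bs_ext (f1 f2 : seq 'I_d -> {perm 'I_d}) s :
  (forall k, (0 < k <= size s)%N -> f1 (drop k s) = f2 (drop k s)) ->
  Bs f1 s = Bs f2 s.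
Proof.
elim: s => //= a s IH H.
have e : f1 s = f2 s.
  by have := H 1%N; rewrite /= drop0; apply; lia.
rewrite e IH //; move=> k hk; have := H k.+1; rewrite /=; apply; lia.
Qed.

Definition tr (u t : seq 'I_d) : seq 'I_d := foldr (fun a acc => step_seq a acc) u t.

Lemma tr_ok (u t : seq 'I_d) : word_ok u -> word_ok (tr u t).
Proof. by move=> ok; elim: t => //= a t IH; exact: step_ok. Qed.

Lemma tr_step (w : seq 'I_d) a (x : seq 'I_d) : word_ok w -> tr w (step_seq a x) = step_seq a (tr w x).
Proof.
move=> okw; case: x => [|b x] //=; case: eqP => [->|ne] //=.
by rewrite step_seqK // tr_ok.
Qed.

Lemma tr_tr (w u t : seq 'I_d) : word_ok w -> tr w (tr u t) = tr (tr w u) t.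
Proof. by move=> okw; elim: t => //= a t <-; rewrite tr_step. Qed.

Lemma tr_rev (s y : seq 'I_d) : tr (rev s ++ y) s = y.
Proof.
elim: s y => //= a s IH y.
by rewrite rev_cons cat_rcons IH /= eqxx.
Qed.

Lemma tr_nil (t : seq 'I_d) : word_ok t -> tr [::] t = t.
Proof.
elim: t => //= a t IH ok; rewrite IH ?(word_ok_tail ok) //.
exact: step_seq_ok_cons.
Qed.

Lemma rev_ok (s : seq 'I_d) : word_ok s -> word_ok (rev s).
Proof.
rewrite /word_ok => ok.
have -> : (fun a b : 'I_d => a != b) = (fun b a : 'I_d => a != b).
  by apply: functional_extensionality => a; apply: functional_extensionality => b; rewrite eq_sym.
by rewrite rev_sorted.
Qed.

Variable u : vert d.

Definition Tv (x : vert d) : vert d := exist _ (tr (val u) (val x)) (tr_ok (val x) (valP u)).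
Definition Tiv (x : vert d) : vert d :=
  exist _ (tr (rev (val u)) (val x)) (tr_ok (val x) (rev_ok (valP u))).

Lemma TvK : cancel Tv Tiv.
Proof.
move=> x; apply: val_inj => /=; rewrite tr_tr ?rev_ok ?(valP u) //.
by rewrite -(cats0 (rev _)) tr_rev tr_nil // (valP x).
Qed.
Lemma TivK : cancel Tiv Tv.
Proof.
move=> x; apply: val_inj => /=; rewrite tr_tr ?(valP u) //.
have -> : tr (val u) (rev (val u)) = [::].
  by rewrite -{1}(revK (val u)) -(cats0 (rev (rev _))) tr_rev.
by rewrite tr_nil // (valP x).
Qed.

Lemma Tv_step x c : Tv (step x c) = step (Tv x) c.
Proof. by apply: val_inj; rewrite /= tr_step // (valP u). Qed.

Lemma Tv_adj x y : adj (Tv x) (Tv y) = adj x y.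
Proof.
apply/adjP/adjP => [[c e]|[c <-]]; last by exists c; rewrite Tv_step.
by exists c; apply: (can_inj TvK); rewrite Tv_step.
Qed.

Definition Tauto : aut d := Aut TvK TivK Tv_adj.

Lemma Tauto_root : af Tauto (root d) = u.
Proof. exact: val_inj. Qed.

Lemma lperm_Tauto x : lperm Tauto x = 1.
Proof. by apply/permP => c; rewrite perm1; apply: lperm_uniq => /=; rewrite Tv_step. Qed.

End RootFix.

Section Alg.
Variable d : nat.
Variables (F F' : {group {perm 'I_d}}).
Hypothesis hFF' : F \subset F'.
Hypothesis horb : forall (f : {perm 'I_d}) (x : 'I_d), f \in F' -> f x \in orbit 'P F x.
Variables (n : nat) (n_pos : (0 < n)%N) (beta : 'I_n -> {set {perm 'I_d}}).
Hypothesis beta_inj : injective beta.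
Hypothesis beta_in : forall i, beta i \in rcosets F F'.
Hypothesis beta0 : beta (Ordinal n_pos) = F.
Variable alpha : {perm 'I_d} -> {perm 'I_n}.
Hypothesis halpha : forall f i, f \in F' -> beta (alpha f i) = beta i :* f.
Local Notation z := (Ordinal n_pos).

Lemma alphaM f1 f2 : f1 \in F' -> f2 \in F' -> alpha (f1 * f2) = alpha f1 * alpha f2.
Proof.
move=> h1 h2; apply/permP => i; rewrite permM; apply: beta_inj.
by rewrite !halpha ?groupM // rcosetM.
Qed.

Lemma alpha1 : alpha 1 = 1.
Proof.
have := alphaM (group1 F') (group1 F'); rewrite mulg1 => /(congr1 (fun p => p * (alpha 1)^-1)).
by rewrite mulgV -mulgA mulgV mulg1 => ->.
Qed.

Lemma alphaV f : f \in F' -> alpha f^-1 = (alpha f)^-1.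
Proof.
move=> hf; apply: (mulgI (alpha f)); rewrite -alphaM ?groupV // !mulgV; exact: alpha1.
Qed.

Lemma alpha_z f : f \in F' -> (alpha f z == z) = (f \in F).
Proof.
move=> hf; apply/eqP/idP => [e|fF].
  have := halpha z hf; rewrite e beta0 => E.
  by rewrite E; exact: rcoset_refl.
by apply: beta_inj; rewrite halpha // beta0 rcoset_id.
Qed.

Definition choosef (ab : option ('I_d * 'I_d)) (j : 'I_n) : {perm 'I_d} :=
  odflt 1 [pick g in F' | (alpha g z == j) &&
     (if ab is Some (a, b) then g a == b else true)].

Lemma choosef_in ab j : choosef ab j \in F'.
Proof. by rewrite /choosef; case: pickP => [g /andP[]|] //=. Qed.

Lemma choosefP a b j : b \in orbit 'P F a ->
  alpha (choosef (Some (a, b)) j) z = j /\ choosef (Some (a, b)) j a = b.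
Proof.
move=> hb.
have [g0 g0F' Ej] := rcosetsP (beta_in j).
have : g0^-1 b \in orbit 'P F a.
  by apply: orbit_trans (horb _ (groupVr g0F')) hb.
case/orbitP => h hF /= Eh; rewrite /= apermE in Eh.
have gF' : h * g0 \in F' by rewrite groupM // (subsetP hFF').
have Ha : alpha (h * g0) z = j.
  apply: beta_inj; rewrite halpha // beta0 Ej rcosetM rcoset_id //.
have Hb : (h * g0) a = b by rewrite permM Eh permKV.
rewrite /choosef; case: pickP => [g /andP [gF /andP [/eqP -> /eqP ->]] //|].
by move/(_ (h * g0)); rewrite gF' Ha Hb !eqxx.
Qed.

Lemma choosefP0 j : alpha (choosef None j) z = j.
Proof.
have [g0 g0F' Ej] := rcosetsP (beta_in j).
have Ha : alpha g0 z = j by apply: beta_inj; rewrite halpha // beta0 Ej.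
rewrite /choosef; case: pickP => [g /andP [gF /andP [/eqP -> _]] //|].
by move/(_ g0); rewrite g0F' Ha !eqxx.
Qed.


Lemma lperm_decomp (g h : aut d) w :
  lperm h w = lperm (aut_mul (aut_inv g) h) w * lperm g (af (aut_mul (aut_inv g) h) w).
Proof.
have E : h = aut_mul g (aut_mul (aut_inv g) h).
  by apply: aut_ext => x /=; rewrite aiK.
by rewrite {1}E lperm_mul.
Qed.

Lemma lperm_inv (h : aut d) v : lperm (aut_inv h) v = (lperm h (ai h v))^-1.
Proof.
have E : lperm (aut_mul h (aut_inv h)) v = 1.
  by apply: lperm_fix => [|c] /=; rewrite aiK.
rewrite lperm_mul /= in E.
by rewrite -[LHS]mulg1 -(mulgV (lperm h (ai h v))) mulgA E mul1g.
Qed.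

Lemma part1 g : in_GFF F F' g -> in_Gnd z (phi alpha g).
Proof.
case=> hF' [S hS]; exists (map (af g) S) => v vS /=.
have : ai g v \notin S.
  by apply: contra vS => H; apply/mapP; exists (ai g v); rewrite ?aiK.
move/hS => H; apply/eqP; rewrite alpha_z ?hF' //.
Qed.

Lemma part2 g h : (forall v, lperm g v \in F') -> (forall v, lperm h v \in F') ->
  phi alpha (aut_mul g h) = Gmul (phi alpha g) (phi alpha h).
Proof.
move=> hg hh; rewrite /phi /Gmul /=; congr pair.
apply: functional_extensionality => v /=.
by rewrite lperm_mul aiK alphaM ?hg ?hh.
Qed.

Lemma Gmul_phi_inv (x : Gel n d) h : (forall v, lperm h v \in F') ->
  Gmul (Gmul x (phi alpha h)) (phi alpha (aut_inv h)) = x.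
Proof.
move=> hh; case: x => s g; rewrite /Gmul /phi /=; congr pair.
  apply: functional_extensionality => v /=.
  by rewrite aiK lperm_inv alphaV ?hh // mulgA mulVg mul1g.
by apply: aut_ext => w /=; rewrite aiK.
Qed.

Lemma inv_GFF h : in_GFF F F' h -> in_GFF F F' (aut_inv h).
Proof.
case=> hF' [S hS]; split=> [v|]; first by rewrite lperm_inv groupV hF'.
exists (map (af h) S) => v vS; rewrite lperm_inv groupV; apply: hS.
by apply: contra vS => H; apply/mapP; exists (ai h v); rewrite ?aiK.
Qed.

Definition nbrs (S : seq (vert d)) : seq (vert d) :=
  flatten [seq v :: [seq step v c | c <- enum 'I_d] | v <- S].

Lemma nbrs_self S v : v \in S -> v \in nbrs S.
Proof. by move=> vS; apply/flattenP; exists (v :: [seq step v c | c <- enum 'I_d]); [apply/mapP; exists v|rewrite mem_head]. Qed.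

Lemma nbrs_step S v c : v \in S -> step v c \in nbrs S.
Proof.
move=> vS; apply/flattenP; exists (v :: [seq step v c | c <- enum 'I_d]); first by apply/mapP; exists v.
by rewrite in_cons; apply/orP; right; apply/mapP; exists c; rewrite ?mem_enum.
Qed.

Lemma fix_nbrs (k : aut d) S v : v \in S ->
  (forall u, u \in nbrs S -> af k u = u) -> af k v = v /\ lperm k v = 1.
Proof.
move=> vS H; have e : af k v = v by apply: H; exact: nbrs_self.
split=> //; apply: lperm_fix => // c; apply: H; exact: nbrs_step.
Qed.

Lemma part4 (U : Gel n d -> Prop) : open_Gnd z U ->
  open_GFF F F' (fun g => U (phi alpha g)).
Proof.
move=> hU g gG Ug; have [S' HS'] := hU _ (part1 gG) Ug.
exists (nbrs S') => h hG kU kfix; apply: HS'; first exact: part1.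
set k := aut_mul (aut_inv g) h in kU kfix.
have Ek : forall v, (Gmul (Ginv (phi alpha g)) (phi alpha h)).1 v = alpha (lperm k (ai k v)).
  move=> v; rewrite /Gmul /Ginv /phi /= afK.
  rewrite (lperm_decomp g h) -/k.
  have -> : af k (ai h (af g v)) = v by rewrite /k /= aiK afK.
  rewrite alphaM ?mulgK //; last by case: gG => gF _; exact: gF.
  by apply: (subsetP hFF'); apply: kU.
split=> [v|v vS]; rewrite Ek.
  by apply/eqP; rewrite alpha_z ?kU // (subsetP hFF') ?kU.
have [e1 e2] := fix_nbrs vS kfix.
have e3 : ai k v = v by rewrite -{1}e1 afK.
by rewrite e3 e2 alpha1.
Qed.

Lemma part5 : closed_Gnd z (fun x => exists2 g, in_GFF F F' g & x = phi alpha g).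
Proof.
move=> [s g] xG nIm.
have [[v0 hv0]|[w0 hw0]] : (exists v, lperm g v \notin F') \/
    (exists w, s w <> alpha (lperm g (ai g w))).
- apply: NNPP => H; apply: nIm; exists g; last first.
    rewrite /phi; congr pair; apply: functional_extensionality => w.
    by apply: NNPP => ne; apply: H; right; exists w.
  have hF' : forall v, lperm g v \in F'.
    by move=> v; apply: NNPP => /negP ne; apply: H; left; exists v.
  split=> //; case: xG => Sx hSx; exists (map (ai g) Sx) => v vS.
  have : af g v \notin Sx by apply: contra vS => H'; apply/mapP; exists (af g v); rewrite ?afK.
  move/hSx => /= e; have : s (af g v) = alpha (lperm g (ai g (af g v))).
    by apply: NNPP => ne; apply: H; right; exists (af g v).
  rewrite afK => E; rewrite -alpha_z ?hF' //; apply/eqP; by rewrite -E.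
- exists (nbrs [:: v0]) => y yG [hn1 hn2] [h hG Ey]; subst y.
  set k := aut_mul (aut_inv g) h in hn2.
  have [e1 e2] : af k v0 = v0 /\ lperm k v0 = 1.
    apply: (@fix_nbrs k [:: v0] v0); first by rewrite mem_head.
    by move=> u /hn2 [].
  have := lperm_decomp g h v0; rewrite -/k e2 mul1g e1 => E.
  by case: hG => /(_ v0); rewrite E (negbTE hv0).
- set u0 := ai g w0.
  exists (nbrs [:: u0]) => y yG [hn1 hn2] [h hG Ey]; subst y.
  set k := aut_mul (aut_inv g) h in hn2.
  have [e1 e2] : af k u0 = u0 /\ lperm k u0 = 1.
    apply: (@fix_nbrs k [:: u0] u0); first by rewrite mem_head.
    by move=> u /hn2 [].
  have := lperm_decomp g h u0; rewrite -/k e2 mul1g e1 => E.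
  have [E1 _] := hn2 u0 (nbrs_self (mem_head _ _)).
  move: E1; rewrite /Gmul /Ginv /phi /= aiK.
  have -> : ai h w0 = u0.
    have : af h u0 = w0 by rewrite -[af h u0](aiK g) -[ai g (af h u0)]/(af k u0) e1 /u0 aiK.
    by move=> <-; rewrite afK.
  rewrite E => E1; apply: hw0.
  by apply: (mulIg (s w0)^-1); rewrite mulgV -/u0 E1.
Qed.

Definition Kset (y : Gel n d) : Prop :=
  af y.2 (root d) = root d /\ forall v, y.1 v z = z.

Fixpoint Dd (J : seq 'I_d -> 'I_n) (w : seq 'I_d) : {perm 'I_d} * seq 'I_d :=
  match w with
  | [::] => (choosef None (J [::]), [::])
  | a :: w' => let p := Dd J w' in
      (choosef (Some (a, p.1 a)) (J (p.1 a :: p.2)), p.1 a :: p.2)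
  end.

Definition fD J w := (Dd J w).1.

Lemma fD_in J w : fD J w \in F'.
Proof. by case: w => [|a w]; exact: choosef_in. Qed.

Lemma Dd_snd J w : (Dd J w).2 = Bs (fD J) w.
Proof. by elim: w => //= a w ->. Qed.

Lemma fD_cons J : cons_ok (fD J).
Proof.
move=> a w _; rewrite /fD /=.
have := @choosefP a (fD J w a) (J ((Dd J w).1 a :: (Dd J w).2)).
by case=> //; apply: horb; exact: fD_in.
Qed.

Lemma fD_alpha J w : alpha (fD J w) z = J (Bs (fD J) w).
Proof.
case: w => [|a w]; first exact: choosefP0.
rewrite /fD /= -Dd_snd; case: (@choosefP a (fD J w a) (J ((Dd J w).1 a :: (Dd J w).2))) => //.
apply: horb; exact: fD_in.
Qed.

Lemma decomp (x : Gel n d) : in_Gnd z x ->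
  exists h, in_GFF F F' h /\ Kset (Gmul x (phi alpha h)).
Proof.
case: x => s g [Sx hSx].
pose t := Tauto (ai g (root d)).
pose J (w : seq 'I_d) : 'I_n :=
  if insub w is Some w' then (s (af g (af t w')))^-1 z else z.
pose k := Bauto (@fD_cons J).
pose h := aut_mul t k.
have Jv : forall w' : vert d, J (val w') = (s (af g (af t w')))^-1 z.
  by move=> w'; rewrite /J valK.
have lh : forall q, lperm h q = fD J (val q).
  by move=> q; rewrite lperm_mul lperm_Tauto mulg1 lperm_Bauto.
have key : forall v, alpha (lperm h (ai h (ai g v))) z = (s v)^-1 z.
  move=> v; rewrite lh fD_alpha.
  have -> : Bs (fD J) (val (ai h (ai g v))) = val (ai t (ai g v)).
    by change (val (af k (ai k (ai t (ai g v)))) = val (ai t (ai g v))); rewrite aiK.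
  by rewrite Jv !aiK.
exists h; split.
  split=> [q|]; first by rewrite lh fD_in.
  exists (map (ai h) (map (ai g) Sx)) => q qS.
  have vS : af g (af h q) \notin Sx.
    apply: contra qS => H; apply/mapP; exists (ai g (af g (af h q))); last by rewrite !afK.
    by apply/mapP; exists (af g (af h q)).
  have e := hSx _ vS; rewrite /= in e.
  have := key (af g (af h q)); rewrite !afK => K.
  have e' : (s (af g (af h q)))^-1 z = z by rewrite -{1}e permK.
  rewrite -alpha_z ?lh ?fD_in //; apply/eqP; by rewrite -lh K e'.
split.
  change (af g (af t (af k (root d))) = root d).
  by rewrite Bauto_root Tauto_root aiK.
by move=> v /=; rewrite permM key permKV.
Qed.

Section Compact.
Variables (I : Type) (U : I -> Gel n d -> Prop).
Hypothesis Uopen : forall i, open_Gnd z (U i).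
Hypothesis Ucov : forall x, in_Gnd z x -> exists i, U i x.

Definition Cov (P : Gel n d -> Prop) :=
  exists s : list I, forall y, Kset y -> P y -> exists2 i, List.In i s & U i y.

Lemma Cov_mono (P Q : Gel n d -> Prop) :
  (forall y, Kset y -> P y -> Q y) -> Cov Q -> Cov P.
Proof. by move=> H [s hs]; exists s => y Ky Py; apply: hs => //; apply: H. Qed.

Local Notation data := ({perm 'I_n} * {perm 'I_d})%type.
Definition d0 : data := (1, 1).
Definition delta (y : Gel n d) v : data := (y.1 v, lperm y.2 v).
Definition ev (j : nat) : vert d := odflt (root d) (unpickle j).

Lemma evK v : ev (pickle v) = v.
Proof. by rewrite /ev pickleK. Qed.

Lemma split_cov (P : Gel n d -> Prop) w : ~ Cov P ->
  exists p : data, ~ Cov (fun y => P y /\ delta y w = p).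
Proof.
move=> nc; apply: NNPP => H; apply: nc.
have H' : forall p : data, Cov (fun y => P y /\ delta y w = p).
  by move=> p; apply: NNPP => ne; apply: H; exists p.
suff : forall l : seq data, exists s : list I, forall y, Kset y -> P y ->
    delta y w \in l -> exists2 i, List.In i s & U i y.
  case/(_ (enum {: data})) => s hs; exists s => y Ky Py.
  by apply: hs => //; rewrite mem_enum.
elim=> [|p l [s2 hs2]]; first by exists nil.
have [s1 hs1] := H' p.
exists (s1 ++ s2)%list => y Ky Py; rewrite in_cons => /orP [/eqP E|yl].
  by have [i ? ?] := hs1 y Ky (conj Py E); exists i => //; apply: List.in_or_app; left.
by have [i ? ?] := hs2 y Ky Py yl; exists i => //; apply: List.in_or_app; right.
Qed.

Definition Cl (l : seq data) (y : Gel n d) :=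
  forall j, (j < size l)%N -> delta y (ev j) = nth d0 l j.

Fixpoint L (m : nat) : seq data :=
  match m with
  | 0 => [::]
  | m'.+1 => rcons (L m') (epsilon (inhabits d0)
       (fun p => ~ Cov (fun y => Cl (L m') y /\ delta y (ev (size (L m'))) = p)))
  end.

Lemma L_size m : size (L m) = m.
Proof. by elim: m => //= m IH; rewrite size_rcons IH. Qed.

Lemma L_nth j m : (j < m)%N -> nth d0 (L m) j = nth d0 (L j.+1) j.
Proof.
elim: m => // m IH jm.
case: (ltnP j m) => [jlt|jge].
  by rewrite /= nth_rcons L_size jlt IH.
by have -> : j = m by lia.
Qed.

Lemma L_NC : ~ Cov (fun _ => True) -> forall m, ~ Cov (Cl (L m)).
Proof.
move=> H0; elim=> [|m IH] /=.
  by move=> C; apply: H0; apply: Cov_mono C => y _ _ j.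
have [p Hp] := split_cov (ev (size (L m))) IH.
have Hq := epsilon_spec (inhabits d0)
  (fun p => ~ Cov (fun y => Cl (L m) y /\ delta y (ev (size (L m))) = p)) (ex_intro _ p Hp).
move: Hq; set q := epsilon _ _ => Hq C; apply: Hq; apply: Cov_mono C => y Ky [C1 C2] j.
rewrite size_rcons nth_rcons ltnS leq_eqVlt => /orP [/eqP ->|jl].
  by rewrite ltnn eqxx.
by rewrite jl; apply: C1.
Qed.

Definition pinf (j : nat) : data := nth d0 (L j.+1) j.

Lemma NC_inhab (P : Gel n d -> Prop) : ~ Cov P -> exists y, Kset y /\ P y.
Proof.
move=> nc; apply: NNPP => H; apply: nc; exists nil => y Ky Py.
by case: H; exists y.
Qed.

Lemma witness : ~ Cov (fun _ => True) -> forall m, exists y, Kset y /\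
  forall j, (j < m)%N -> delta y (ev j) = pinf j.
Proof.
move=> H0 m; have [y [Ky Cy]] := NC_inhab (@L_NC H0 m); exists y; split=> // j jm.
by rewrite Cy ?L_size // (L_nth jm).
Qed.

Lemma bound (T : seq (vert d)) : exists M, forall t, t \in T -> (pickle t < M)%N.
Proof.
elim: T => [|a T [M HM]]; first by exists 0%N.
exists (maxn M (pickle a).+1) => t; rewrite in_cons => /orP [/eqP ->|/HM].
  by rewrite leq_max leqnn orbT.
by move=> h; rewrite leq_max h.
Qed.

Lemma Kcover : Cov (fun _ => True).
Proof.
apply: NNPP => H0.
have W := witness H0.
pose sinf (v : vert d) := (pinf (pickle v)).1.
pose finf (w : seq 'I_d) := (pinf (pickle (insubd (root d) w))).2.
have Hc : cons_ok finf.
  move=> a w ok; rewrite /finf.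
  have okw := word_ok_tail ok.
  have E : insubd (root d) (a :: w) = step (insubd (root d) w) a.
    by apply: val_inj; rewrite /= !insubdK // step_seq_ok_cons.
  have [M HM] := bound [:: insubd (root d) (a :: w); insubd (root d) w].
  have [y [Ky Hy]] := W M.
  have h1 : (pickle (insubd (root d) w) < M)%N by apply: HM; rewrite !inE eqxx orbT.
  have h2 : (pickle (insubd (root d) (a :: w)) < M)%N by apply: HM; rewrite !inE eqxx.
  rewrite -(Hy _ h1) -(Hy _ h2) !evK /delta /= E.
  exact: lperm_consist.
pose yinf : Gel n d := (sinf, Bauto Hc).
have sinfz : forall v, sinf v z = z.
  move=> v; have [y [Ky Hy]] := W (pickle v).+1.
  by rewrite /sinf -Hy // evK /delta /=; case: Ky => _ ->.
have Kinf : Kset yinf by split=> //; exact: Bauto_root.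
have [i Ui] := Ucov (ex_intro _ nil (fun v _ => sinfz v) : in_Gnd z yinf).
have [S HS] := Uopen (ex_intro _ nil (fun v _ => sinfz v) : in_Gnd z yinf) Ui.
pose T := flatten [seq af (Bauto Hc) v :: [seq insubd (root d) (drop k (val v)) | k <- iota 1 (size (val v))] | v <- S].
have [M HM] := bound T.
apply: (@L_NC H0 M); exists [:: i] => y' Ky' Cy'.
have Ag : forall t, t \in T -> delta y' t = pinf (pickle t).
  by move=> t tT; rewrite -{1}(evK t) Cy' ?L_size ?HM // (L_nth (HM _ tT)).
exists i; first by left.
apply: HS; first by exists nil => v _; case: Ky' => _ ->.
split=> [v|v vS] /=.
  by rewrite permM; case: Ky' => _ ->; rewrite -{1}(sinfz (af (Bauto Hc) v)) permK.
have inT1 : af (Bauto Hc) v \in T.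
  apply/flattenP; exists (af (Bauto Hc) v :: [seq insubd (root d) (drop k (val v)) | k <- iota 1 (size (val v))]); last exact: mem_head.
  by apply/mapP; exists v.
split.
  by have := congr1 fst (Ag _ inT1); rewrite /delta /= => ->; rewrite mulgV.
suff e : af y'.2 v = af (Bauto Hc) v by rewrite /= e; exact: BvK.
apply: val_inj; rewrite -{1}(valKd (root d) v) rootfix_rep; last by exact: (valP v).
  change (Bs (ldata y'.2) (val v) = Bs finf (val v)); apply: Bs_ext => k kv.
  have inT : insubd (root d) (drop k (val v)) \in T.
    apply/flattenP; exists (af (Bauto Hc) v :: [seq insubd (root d) (drop k (val v)) | k <- iota 1 (size (val v))]); first by apply/mapP; exists v.
    rewrite in_cons; apply/orP; right; apply/mapP; exists k => //.
    by rewrite mem_iota; case/andP: kv => k1 k2; rewrite k1 add1n ltnS.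
  by have := congr1 snd (Ag _ inT); rewrite /delta /ldata /= => ->.
by case: Ky'.
Qed.

End Compact.

Lemma part6 : cocompact_Gnd z (fun x => exists2 g, in_GFF F F' g & x = phi alpha g).
Proof.
move=> I U Uo Usat Uc.
have [s hs] := Kcover Uo Uc.
exists s => x xG.
have [h [hG Kx]] := decomp xG.
have [i iS Ui] := hs _ Kx Logic.I.
exists i => //.
rewrite -(@Gmul_phi_inv x h); last by case: hG.
apply: Usat => //.
  by exists nil => v _; case: Kx => _ ->.
by exists (aut_inv h) => //; exact: inv_GFF.
Qed.

Lemma main_all :
  let Im := fun x : Gel n d => exists2 g, in_GFF F F' g & x = phi alpha g in
  (forall g, in_GFF F F' g -> in_Gnd z (phi alpha g)) /\
  (forall g h, in_GFF F F' g -> in_GFF F F' h ->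
     phi alpha (aut_mul g h) = Gmul (phi alpha g) (phi alpha h)) /\
  (forall g h, in_GFF F F' g -> in_GFF F F' h ->
     phi alpha g = phi alpha h -> af g = af h) /\
  (forall U, open_Gnd z U -> open_GFF F F' (fun g => U (phi alpha g))) /\
  closed_Gnd z Im /\
  cocompact_Gnd z Im.
Proof.
move=> Im; split; first exact: part1.
split; first by move=> g h [hg _] [hh _]; exact: part2.
split; first by move=> g h _ _ E; rewrite -[g]/((phi alpha g).2) E.
split; first exact: part4.
split; [exact: part5 | exact: part6].
Qed.

End Alg.

Theorem proposition2
  (d : nat) (hd : (3 <= d)%N)
  (F F' : {group {perm 'I_d}})
  (hFF' : F \subset F')
  (horb : forall (f : {perm 'I_d}) (x : 'I_d), f \in F' -> f x \in orbit 'P F x)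
  (n : nat) (hn : n = #|F' : F|) (n_pos : (0 < n)%N)
  (beta : 'I_n -> {set {perm 'I_d}})
  (beta_inj : injective beta)
  (beta_in : forall i, beta i \in rcosets F F')
  (beta_onto : forall C, C \in rcosets F F' -> exists i, beta i = C)
  (beta0 : beta (Ordinal n_pos) = F)
  (alpha : {perm 'I_d} -> {perm 'I_n})
  (halpha : forall f i, f \in F' -> beta (alpha f i) = beta i :* f) :
  let z := Ordinal n_pos in
  let Im := fun x : Gel n d => exists2 g, in_GFF F F' g & x = phi alpha g in
  (forall g, in_GFF F F' g -> in_Gnd z (phi alpha g)) /\
  (forall g h, in_GFF F F' g -> in_GFF F F' h ->
     phi alpha (aut_mul g h) = Gmul (phi alpha g) (phi alpha h)) /\
  (forall g h, in_GFF F F' g -> in_GFF F F' h ->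
     phi alpha g = phi alpha h -> af g = af h) /\
  (forall U, open_Gnd z U -> open_GFF F F' (fun g => U (phi alpha g))) /\
  closed_Gnd z Im /\
  cocompact_Gnd z Im.
Proof.
exact: (main_all hFF' horb beta_inj beta_in beta0 halpha).
Qed.
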